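(* Let $X$ be a random vector in $\mathbb{R}^n$ such that $X\in B$ almost surely, where $B$ is a Borel subset of $\mathbb{R}^n$. Suppose there exist a measurable function $d:B\to\mathbb{R}^m$ and a constant $c>0$ such that $$\|d(x)-d(y)\|\ge c\,\|x-y\|\qquad\forall x,y\in B$$ (for some norms on $\mathbb{R}^m$ and $\mathbb{R}^n$). Then $\mathbb{P}\big(X\in\mathcal{C}_m(X)\big)=1$.
   Context: For a random vector $X$ in $\mathbb{R}^n$ and an integer $m\ge0$, the $m$-dimensional mould $\mathcal{C}_m(X)$ is the set of all $x\in\mathbb{R}^n$ such that $\liminf_{\epsilon\to0^+}\mathbb{P}(\|X-x\|_2<\epsilon)/\epsilon^m>0$. *)

(* Defs.v *)
From HB Require Import structures.
From mathcomp Require Import all_boot all_order all_algebra.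
From mathcomp Require Import all_classical all_reals all_analysis.
Set Implicit Arguments. Unset Strict Implicit. Unset Printing Implicit Defensive.
Import Order.TTheory GRing.Theory Num.Theory.
Import numFieldNormedType.Exports.
Local Open Scope classical_set_scope.
Local Open Scope ring_scope.

Definition euclid_norm {R : realType} {n : nat} (v : 'rV[R]_n) : R :=
  Num.sqrt (\sum_(i < n) v ord0 i ^+ 2).

(* Borel sets of R^n: sigma-algebra generated by the open sets (of the
   standard topology on 'rV[R]_n, which is the usual Euclidean topology). *)
Definition borel_rV {R : realType} (n : nat) (A : set 'rV[R]_n) : Prop :=
  <<s open >> A.

Definition random_vector {dT : measure_display} {T : measurableType dT}
  {R : realType} {n : nat} (X : T -> 'rV[R]_n) : Prop :=
  forall A : set 'rV[R]_n, borel_rV A -> measurable (X @^-1` A).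

Definition measurable_on_rV {R : realType} {n m : nat} (B : set 'rV[R]_n)
  (f : 'rV[R]_n -> 'rV[R]_m) : Prop :=
  forall A : set 'rV[R]_m, borel_rV A -> borel_rV (B `&` f @^-1` A).

Definition is_norm {R : realType} {n : nat} (N : 'rV[R]_n -> R) : Prop :=
  [/\ (forall v, N v = 0 -> v = 0),
      (forall (a : R) v, N (a *: v) = `|a| * N v) &
      (forall u v, N (u + v) <= N u + N v)].

(* The m-dimensional mould C_m(X) = { x | liminf_{eps -> 0+} P(||X - x||_2 < eps) / eps^m > 0 }. *)
Definition mould {dT : measure_display} {T : measurableType dT} {R : realType}
  (P : probability T R) {n : nat} (X : T -> 'rV[R]_n) (m : nat) : set 'rV[R]_n :=
  [set x | (0 < limf_einf
     (fun eps : R => P [set w | (euclid_norm (X w - x) < eps)%R] * ((eps ^+ m)^-1)%R%:E)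
     (0^'+))%E].

(* Main.v *)
Require Import Defs.
From HB Require Import structures.
From mathcomp Require Import all_boot all_order all_algebra.
From mathcomp Require Import all_classical all_reals all_analysis.
From mathcomp Require Import ring lra.
Import Order.TTheory GRing.Theory Num.Theory.
Import numFieldNormedType.Exports.
Local Open Scope classical_set_scope.
Local Open Scope ring_scope.
Section Cubes.
Variables (R : realType) (m p : nat).

Definition pw (k : nat) : R := (2 ^ k)%:R.
Definition sh : R := pw p.
Definition cube k (z : 'I_m -> nat) : set 'rV[R]_m :=
  [set y | forall i, (z i)%:R <= (y 0 i + sh) * pw k < (z i).+1%:R].
Definition box : set 'rV[R]_m := [set y | forall i, 0 <= y 0 i + sh < pw p.+1].

Lemma pw_gt0 k : 0 < pw k.
Proof. by rewrite /pw ltr0n expn_gt0. Qed.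

Lemma pwD k d : pw (k + d) = pw k * pw d.
Proof. by rewrite /pw expnD natrM. Qed.

Lemma nat_itv_uniq (t : R) (a b : nat) :
  a%:R <= t < a.+1%:R -> b%:R <= t < b.+1%:R -> a = b.
Proof.
move=> /andP[a1 a2] /andP[b1 b2]; apply/eqP; rewrite eqn_leq.
have h1 := le_lt_trans a1 b2; have h2 := le_lt_trans b1 a2.
by rewrite ltr_nat ltnS in h1; rewrite ltr_nat ltnS in h2; rewrite h1 h2.
Qed.

Lemma cube_uniq k z z' y : cube k z y -> cube k z' y -> z =1 z'.
Proof. by move=> h h' i; exact: nat_itv_uniq (h i) (h' i). Qed.

Lemma cube_nest k d z y : cube (k + d) z y -> cube k (fun i => (z i %/ 2 ^ d)%N) y.
Proof.
move=> h i; have /andP[h1 h2] := h i.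
set t := y 0 i + sh in h1 h2 *.
have N0 : 0 < pw d := pw_gt0 d.
rewrite -(ler_pM2r N0) -(ltr_pM2r N0) -mulrA -pwD.
rewrite /pw -!natrM; apply/andP; split.
  apply: le_trans h1; rewrite ler_nat; exact: leq_divM.
apply: (lt_le_trans h2); rewrite ler_nat.
rewrite {1}(divn_eq (z i) (2 ^ d)) mulSn addnC -addSn leq_add2r.
by rewrite ltn_pmod // expn_gt0.
Qed.

Lemma cube_grid K (g : 'I_m -> nat) :
  cube K g (\row_i ((g i)%:R / pw K - sh)).
Proof.
move=> i; rewrite mxE subrK mulfVK; last by rewrite gt_eqF // pw_gt0.
by apply/andP; split; [exact: lexx | rewrite ltr_nat].
Qed.

Lemma box_cube y k : box y -> exists z, cube k z y /\ forall i, (z i < 2 ^ (p.+1 + k))%N.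
Proof.
move=> hb.
have x0 i : 0 <= (y 0 i + sh) * pw k.
  by apply: mulr_ge0; [case/andP: (hb i) | exact: ltW (pw_gt0 k)].
exists (fun i => Num.truncn ((y 0 i + sh) * pw k)); split.
  by move=> i; exact: truncn_itv.
move=> i; have /andP[t1 _] := truncn_itv (x0 i).
rewrite -(ltr_nat R); apply: (le_lt_trans t1).
have /andP[_ b2] := hb i.
rewrite -/(pw _) pwD ltr_pM2r // pw_gt0 //.
Qed.

Lemma entry_le_norm (v : 'rV[R]_m) i : `|v 0 i| <= `|v|.
Proof.
have -> : `|v| = mx_norm v by []. rewrite mx_normrE.
by apply/bigmax_geP; right => /=; exists (ord0, i).
Qed.

Lemma norm_lt_entries (v : 'rV[R]_m) r : 0 < r -> (forall i, `|v 0 i| < r) -> `|v| < r.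
Proof.
move=> r0 h; have -> : `|v| = mx_norm v by []. rewrite mx_normrE.
apply: bigmax_lt => // -[a b] _ /=.
by rewrite (ord1 a); exact: h.
Qed.

Lemma cube_ball k z y y' r : cube k z y -> cube k z y' -> (pw k)^-1 <= r -> `|y - y'| < r.
Proof.
move=> hy hy' hr.
have r0 : 0 < r by apply: lt_le_trans hr; rewrite invr_gt0 pw_gt0.
apply: norm_lt_entries => // i.
apply: lt_le_trans hr.
rewrite -(ltr_pM2r (pw_gt0 k)) mulVf ?gt_eqF ?pw_gt0 //.
have e : `|(y - y') 0 i| * pw k = `|(y - y') 0 i * pw k| by rewrite normrM (ger0_norm (ltW (pw_gt0 k))).
rewrite e mxE [X in X * _]/= mxE.
have -> : (y 0 i - y' 0 i) * pw k = (y 0 i + sh) * pw k - (y' 0 i + sh) * pw k.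
  by rewrite -mulrBl; congr (_ * _); rewrite opprD addrACA subrr addr0.
have /andP[a1 a2] := hy i; have /andP[b1 b2] := hy' i.
rewrite -natr1 in a2 b2.
rewrite ltr_norml; apply/andP; split; lra.
Qed.

End Cubes.

Section Meas.
Variables (R : realType) (m : nat).
Local Notation RV := (g_sigma_algebraType (@open 'rV[R]_m)).

Lemma open_meas (A : set 'rV[R]_m) : open A -> measurable (A : set RV).
Proof. by move=> oA; exact: sub_gen_smallest. Qed.

Lemma closed_meas (A : set 'rV[R]_m) : closed A -> measurable (A : set RV).
Proof.
move=> cA; rewrite -(setCK A); apply: measurableC; apply: open_meas.
exact: closed_openC.
Qed.

Lemma cont_coord_aff (i : 'I_m) (a b : R) :
  continuous (fun y : 'rV[R]_m => (y 0 i + a) * b).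
Proof.
move=> y.
apply: (@continuousM _ _ (fun y : 'rV[R]_m => y 0 i + a) (fun=> b)); last exact: cst_continuous.
apply: (@continuousD _ _ _ (fun y : 'rV[R]_m => y 0 i) (fun=> a)); last exact: cst_continuous.
exact: coord_continuous.
Qed.

Lemma cube_meas p k z : measurable (cube R m p k z : set RV).
Proof.
have -> : cube R m p k z = \bigcap_(i in [set: 'I_m])
   ([set y : 'rV[R]_m | (z i)%:R <= (y 0 i + sh R p) * pw R k] `&`
    [set y : 'rV[R]_m | (y 0 i + sh R p) * pw R k < (z i).+1%:R]).
  apply/seteqP; split => y.
    by move=> h i _; have /andP[] := h i.
  by move=> h i; have [h1 h2] := h i I; apply/andP.
apply: fin_bigcap_measurable; first exact: finite_finset.
move=> i _; apply: measurableI.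
  apply: closed_meas.
  have := proj1 (continuous_closedP _) (cont_coord_aff i (sh R p) (pw R k)) _ (@closed_ge _ (z i)%:R).
  by [].
apply: open_meas.
have := proj1 (continuousP _) (cont_coord_aff i (sh R p) (pw R k)) _ (@open_lt _ (z i).+1%:R).
by [].
Qed.

Lemma meas_box_like (c d : 'I_m -> R) (a b : R) :
  measurable ([set y : 'rV[R]_m | forall i, c i <= (y 0 i + a) * b < d i] : set RV).
Proof.
have -> : [set y : 'rV[R]_m | forall i, c i <= (y 0 i + a) * b < d i] =
   \bigcap_(i in [set: 'I_m])
   ([set y : 'rV[R]_m | c i <= (y 0 i + a) * b] `&`
    [set y : 'rV[R]_m | (y 0 i + a) * b < d i]).
  apply/seteqP; split => y.
    by move=> h i _; have /andP[] := h i.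
  by move=> h i; have [h1 h2] := h i I; apply/andP.
apply: fin_bigcap_measurable; first exact: finite_finset.
move=> i _; apply: measurableI.
  apply: closed_meas.
  have := proj1 (continuous_closedP _) (cont_coord_aff i a b) _ (@closed_ge _ (c i)).
  by [].
apply: open_meas.
have := proj1 (continuousP _) (cont_coord_aff i a b) _ (@open_lt _ (d i)).
by [].
Qed.

Lemma box_meas p : measurable (box R m p : set RV).
Proof.
have -> : box R m p = [set y : 'rV[R]_m | forall i, (fun=> 0) i <= (y 0 i + sh R p) * 1 < (fun=> pw R p.+1) i].
  by apply/seteqP; split => y h i; have := h i; rewrite mulr1.
exact: meas_box_like.
Qed.

Lemma measure_bigsetU_le (mu : {measure set RV -> \bar R}) (I : Type) (s : seq I)
  (P : pred I) (F : I -> set RV) : (forall i, measurable (F i)) ->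
  (mu (\big[setU/set0]_(i <- s | P i) F i) <= \sum_(i <- s | P i) mu (F i))%E.
Proof.
move=> mF; elim: s => [|a s ih]; first by rewrite !big_nil measure0.
rewrite !big_cons; case: (P a) => //.
apply: le_trans (measureU2 _ _ _) _ => //; first exact: bigsetU_measurable.
exact: leeD.
Qed.

Lemma mem_bigsetU_seq (T : Type) (I : eqType) (s : seq I) (P : pred I) (F : I -> set T) i y :
  i \in s -> P i -> F i y -> (\big[setU/set0]_(j <- s | P j) F j) y.
Proof.
elim: s => [//|a s ih]; rewrite inE big_cons => /orP[/eqP<-|hs] Pi Fy.
  by rewrite Pi; left.
by case: (P a); [right|]; apply: ih.
Qed.

End Meas.

Set Implicit Arguments. Unset Strict Implicit.
Arguments box_cube {R m p y} k.
Arguments cube_uniq {R m p k z z' y}.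
Arguments cube_nest {R m p k d z y}.
Arguments cube_ball {R m p k z y y' r}.

Section Core.
Variables (R : realType) (m : nat).
Local Notation RV := (g_sigma_algebraType (@open 'rV[R]_m)).
Variable nu : {measure set RV -> \bar R}.
Variables (p : nat) (delta : R).

Local Notation cube := (cube R m p).
Local Notation pw := (pw R).
Local Notation box := (box R m p).

Definition light k z := (nu (cube k z) <= (delta / pw k ^+ m)%:E)%E.
Definition ltp k y := exists z, cube k z y /\ light k z.
Definition Lp k y := box y /\ ltp k y /\ forall j, (j < k)%N -> ~ ltp j y.
Definition Sg k := ((2 ^ (p.+1 + k)).-1.+1)%N.

Lemma SgE k : Sg k = (2 ^ (p.+1 + k))%N.
Proof. by rewrite /Sg prednK // expn_gt0. Qed.

Definition ofz k (z : {ffun 'I_m -> 'I_(Sg k)}) : 'I_m -> nat := fun i => z i.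

Definition Zk k : {set {ffun 'I_m -> 'I_(Sg k)}} :=
  [set z | `[< exists y, Lp k y /\ cube k (@ofz k z) y >] ].
Definition Fk k : set RV := \big[setU/set0]_(z in Zk k) cube k (@ofz k z).
Definition Gk k : set RV :=
  \big[setU/set0]_(z : {ffun 'I_m -> 'I_(Sg k)} | `[< light k (@ofz k z) >]) cube k (@ofz k z).
Definition Nd : set RV := box `&` \bigcup_k Gk k.

Lemma cube_ext k z z' : z =1 z' -> cube k z = cube k z'.
Proof. by move=> h; rewrite (boolp.funext h). Qed.

Definition toff k (z : 'I_m -> nat) : {ffun 'I_m -> 'I_(Sg k)} := [ffun i => inord (z i)].

Lemma toffK k z : (forall i, (z i < 2 ^ (p.+1 + k))%N) -> @ofz k (toff k z) =1 z.
Proof. by move=> h i; rewrite /ofz /toff ffunE inordK // prednK ?expn_gt0. Qed.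

Lemma Nd_meas : measurable Nd.
Proof.
apply: measurableI; first exact: box_meas.
apply: bigcup_measurable => k _.
by apply: bigsetU_measurable => z _; exact: cube_meas.
Qed.

Lemma Fk_meas k : measurable (Fk k).
Proof. by apply: bigsetU_measurable => z _; exact: cube_meas. Qed.

Lemma ltp_Gk k y : box y -> ltp k y -> Gk k y.
Proof.
move=> hb [z [cz lz]].
have [z' [cz' hz']] := box_cube k hb.
have e := cube_uniq cz cz'.
apply: (@mem_bigsetU_seq _ _ _ _ _ (toff k z')); first exact: mem_index_enum.
  apply/asboolP; rewrite /light (cube_ext k (toffK hz')) -(cube_ext k e); exact: lz.
by rewrite (cube_ext k (toffK hz')).
Qed.

Lemma Gk_ltp k y : Gk k y -> ltp k y.
Proof.
rewrite /Gk -bigcup_seq_cond => -[z /= /andP[_ /asboolP lz] cz].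
by exists (@ofz k z).
Qed.

Lemma Nd_cover : Nd `<=` \bigcup_k Fk k.
Proof.
move=> y [hb [k _ /Gk_ltp hk]].
have ex : exists k, `[< ltp k y >] by exists k; apply/asboolP.
case: (ex_minnP ex) => k0 /asboolP h0 hmin.
have [z' [cz' hz']] := box_cube k0 hb.
exists k0 => //.
apply: (@mem_bigsetU_seq _ _ _ _ _ (toff k0 z')); first exact: mem_index_enum.
  rewrite inE; apply/asboolP; exists y; split.
    split => //; split => // j jk hj.
    by have := hmin j (introT (asboolP _) hj); rewrite leqNgt jk.
  by rewrite (cube_ext k0 (toffK hz')).
by rewrite (cube_ext k0 (toffK hz')).
Qed.

Lemma Zk_light k z : z \in Zk k -> light k (@ofz k z).
Proof.
rewrite inE => /asboolP [y [[_ [[z' [cz' lz']] _]] cy]].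
by rewrite /light -(cube_ext k (cube_uniq cz' cy)).
Qed.

Lemma Fk_bound k : (nu (Fk k) <= (#|Zk k|%:R * (delta / pw k ^+ m))%:E)%E.
Proof.
rewrite /Fk; apply: le_trans (@measure_bigsetU_le R m nu _ _ _ _ _) _; first by move=> z; exact: cube_meas.
apply: le_trans (lee_sum _ (fun z hz => Zk_light hz)) _.
by rewrite sumEFin sumr_const mulr_natl.
Qed.

Lemma cube_eqf k z z' y : z =1 z' -> cube k z y -> cube k z' y.
Proof. by move=> h c i; rewrite -h; exact: c i. Qed.

Section Count.
Variable K : nat.

Definition Phi k (zf : {ffun 'I_m -> 'I_(Sg k)} * {ffun 'I_m -> 'I_(2 ^ (K - k))%N}) :
  {ffun 'I_m -> 'I_(Sg K)} := [ffun i => inord (zf.1 i * 2 ^ (K - k) + zf.2 i)%N].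

Lemma Phi_val k zf i : (k <= K)%N -> (@Phi k zf i : nat) = (zf.1 i * 2 ^ (K - k) + zf.2 i)%N.
Proof.
move=> kK; rewrite ffunE inordK // prednK ?expn_gt0 //.
have h1 : (zf.1 i < 2 ^ (p.+1 + k))%N by rewrite -SgE.
have h2 : (zf.2 i < 2 ^ (K - k))%N := ltn_ord _.
have -> : (2 ^ (p.+1 + K) = 2 ^ (p.+1 + k) * 2 ^ (K - k))%N.
  by rewrite -expnD -addnA subnKC.
apply: (@leq_trans ((zf.1 i).+1 * 2 ^ (K - k))%N).
  by rewrite mulSn [X in (_ < X)%N]addnC ltn_add2l.
by rewrite leq_mul2r h1 orbT.
Qed.

Lemma Phi_inj k : (k <= K)%N -> injective (@Phi k).
Proof.
move=> kK [z1 f1] [z2 f2] /ffunP h.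
have N0 : (0 < 2 ^ (K - k))%N by rewrite expn_gt0.
have hv i : (z1 i * 2 ^ (K - k) + f1 i = z2 i * 2 ^ (K - k) + f2 i)%N.
  have := congr1 val (h i); rewrite /= !Phi_val //.
congr pair; apply/ffunP => i; apply: val_inj => /=.
  have := congr1 (divn^~ (2 ^ (K - k))%N) (hv i).
  by rewrite /= !divnMDl // !divn_small // !addn0.
have := congr1 (modn^~ (2 ^ (K - k))%N) (hv i).
by rewrite /= !modnMDl !modn_small.
Qed.

Definition S k : {set {ffun 'I_m -> 'I_(Sg K)}} := (@Phi k) @: (finset.setX (Zk k) [set: {ffun 'I_m -> 'I_(2 ^ (K - k))%N}]).

Lemma card_S k : (k <= K)%N -> #|S k| = (#|Zk k| * (2 ^ (K - k)) ^ m)%N.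
Proof.
move=> kK; rewrite card_imset; last exact: Phi_inj.
by rewrite cardsX cardsT card_ffun !card_ord.
Qed.

Lemma S_disj k1 k2 : (k1 < k2)%N -> (k2 <= K)%N -> S k1 :&: S k2 = finset.set0.
Proof.
move=> k12 k2K; have k1K : (k1 <= K)%N := ltnW (leq_trans k12 k2K).
apply/setP => g; rewrite !inE; apply/negP => /andP[/imsetP[[z1 f1] h1 e1] /imsetP[[z2 f2] h2 e2]].
move: h1 h2; rewrite !finset.in_setX /= => /andP[hz1 _] /andP[hz2 _].
pose y := \row_i ((g i : nat)%:R / pw K - sh R p) : 'rV[R]_m.
have cg : cube K (fun i => (g i : nat)) y := cube_grid R m p K _.
have c1 : cube k1 (@ofz k1 z1) y.
  have := @cube_nest R m p k1 (K - k1) (fun i => g i : nat) y; rewrite subnKC // => /(_ cg).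
  apply: cube_eqf => i; rewrite e1 Phi_val // divnMDl ?expn_gt0 // divn_small ?addn0 //.
have c2 : cube k2 (@ofz k2 z2) y.
  have := @cube_nest R m p k2 (K - k2) (fun i => g i : nat) y; rewrite subnKC // => /(_ cg).
  apply: cube_eqf => i; rewrite e2 Phi_val // divnMDl ?expn_gt0 // divn_small ?addn0 //.
move: hz2; rewrite inE => /asboolP [y2 [[_ [_ hmin]] cy2]].
have n2 : cube k1 (fun i => (@ofz k2 z2 i %/ 2 ^ (k2 - k1))%N) y2.
  by have := @cube_nest R m p k1 (k2 - k1) _ y2; rewrite subnKC; [move=> /(_ _ cy2) // | exact: ltnW].
have n2' : cube k1 (fun i => (@ofz k2 z2 i %/ 2 ^ (k2 - k1))%N) y.
  by have := @cube_nest R m p k1 (k2 - k1) _ y; rewrite subnKC; [move=> /(_ _ c2) // | exact: ltnW].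
have e := cube_uniq c1 n2'.
have c1y2 : cube k1 (@ofz k1 z1) y2 := cube_eqf (fun i => esym (e i)) n2.
apply: (hmin k1 k12); exists (@ofz k1 z1); split => //; exact: Zk_light hz1.
Qed.

End Count.

Lemma sum_card_disj (T : finType) (A : nat -> {set T}) n :
  (forall a b, (a < b)%N -> (b < n)%N -> A a :&: A b = finset.set0) ->
  (\sum_(k < n) #|A k|)%N = #|(\bigcup_(k < n) A k)%SET|.
Proof.
elim: n => [|n ih] h; first by rewrite !big_ord0 cards0.
rewrite !big_ord_recr /= cardsU ih; last first.
  by move=> a b ab bn; apply: h => //; exact: leqW.
have -> : (\bigcup_(k < n) A k)%SET :&: A n = finset.set0.
  apply/setP => x; rewrite !inE; apply/negP => /andP[/bigcupP[k _ hk] hn].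
  have := h k n (ltn_ord k) (ltnSn n); move/setP/(_ x); rewrite !inE hk hn.
  by [].
by rewrite cards0 subn0.
Qed.

Lemma count_bound K :
  (\sum_(k < K) #|Zk k| * (2 ^ (K - k)) ^ m <= (2 ^ (p.+1 + K)) ^ m)%N.
Proof.
rewrite (eq_bigr (fun k : 'I_K => #|S K k|)); last first.
  by move=> k _; rewrite card_S // ltnW.
rewrite sum_card_disj; last first.
  by move=> a b ab bK; apply: S_disj => //; exact: ltnW.
apply: leq_trans (max_card _) _.
by rewrite card_ffun !card_ord SgE.
Qed.

Lemma partial_bound K : 0 <= delta ->
  (\sum_(k < K) nu (Fk k) <= (delta * pw p.+1 ^+ m)%:E)%E.
Proof.
move=> d0.
apply: (@le_trans _ _ (\sum_(k < K) ((#|Zk k|%:R * (delta / pw k ^+ m))%:E))%E).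
  by apply: lee_sum => k _; exact: Fk_bound.
rewrite sumEFin lee_fin.
have e (k : 'I_K) : #|Zk k|%:R * (delta / pw k ^+ m) =
    delta / pw K ^+ m * (#|Zk k| * (2 ^ (K - k)) ^ m)%:R.
  have -> : pw K = pw k * pw (K - k) by rewrite -pwD subnKC // ltnW.
  rewrite natrM natrX -/(pw (K - k)) exprMn.
  have h1 : pw k ^+ m != 0 by rewrite expf_neq0 // gt_eqF // pw_gt0.
  have h2 : pw (K - k) ^+ m != 0 by rewrite expf_neq0 // gt_eqF // pw_gt0.
  by field; rewrite h1 h2.
rewrite (eq_bigr _ (fun k _ => e k)) -mulr_sumr -natr_sum.
have h0 : 0 <= delta / pw K ^+ m by rewrite divr_ge0 // exprn_ge0 // ltW // pw_gt0.
apply: le_trans (@ler_wpM2l _ _ h0 _ (((2 ^ (p.+1 + K)) ^ m)%N%:R) _) _.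
  rewrite ler_nat; exact: count_bound.
rewrite natrX -/(pw (p.+1 + K)) pwD exprMn.
have h1 : pw K ^+ m != 0 by rewrite expf_neq0 // gt_eqF // pw_gt0.
rewrite le_eqVlt; apply/orP; left; apply/eqP; field; by [].
Qed.

Lemma Nd_bound : 0 <= delta -> (nu Nd <= (delta * pw p.+1 ^+ m)%:E)%E.
Proof.
move=> d0.
apply: le_trans (measure_sigma_subadditive nu Fk_meas Nd_meas Nd_cover) _.
apply: lime_le; first by apply: is_cvg_nneseries => n _ _; exact: measure_ge0.
apply: nearW => K; rewrite big_mkord; exact: partial_bound.
Qed.

End Core.

Lemma ereal_le_inv_nat (R : realType) (x : \bar R) :
  (forall j : nat, (x <= (j.+1%:R^-1)%:E)%E) -> (x <= 0)%E.
Proof.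
move=> h; apply/lee_addgt0Pr => e e0; rewrite add0e.
have ei0 : 0 <= e^-1 by rewrite invr_ge0 ltW.
have /andP[_ hj] := truncn_itv ei0.
apply: le_trans (h (Num.truncn e^-1)) _; rewrite lee_fin.
rewrite -[leRHS](invrK e) lef_pV2 ?posrE ?invr_gt0 ?ltr0n //; exact: ltW.
Qed.

Lemma ex_box (R : realType) m (y : 'rV[R]_m) : exists p, box R m p y.
Proof.
exists (Num.truncn `|y|) => i.
set p := Num.truncn `|y|.
have hy : `|y 0 i| < pw R p.
  apply: le_lt_trans (@entry_le_norm R m y i) _.
  have /andP[_ h] := truncn_itv (normr_ge0 y).
  apply: lt_le_trans h _; rewrite ler_nat; exact: ltn_expl.
have e2 : pw R p.+1 = 2 * pw R p by rewrite /pw expnS natrM.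
rewrite e2 /sh; move: hy; rewrite ltr_norml => /andP[h1 h2].
apply/andP; split.
  by rewrite -[X in _ + X](opprK (pw R p)) subr_ge0 ltW.
by rewrite mulr_natl mulr2n ltrD2r.
Qed.

Lemma pw_exists (R : realType) (r : R) : 0 < r -> exists k, (pw R k)^-1 <= r.
Proof.
move=> r0; have ri0 : 0 <= r^-1 by rewrite invr_ge0 ltW.
have /andP[_ h] := truncn_itv ri0.
exists (Num.truncn r^-1).
rewrite -[leRHS](invrK r) lef_pV2 ?posrE ?invr_gt0 ?pw_gt0 //.
apply: ltW; apply: lt_le_trans h _; rewrite ler_nat; exact: ltn_expl.
Qed.

Lemma pw_choose (R : realType) (r : R) : 0 < r -> r <= 1 ->
  exists k, (pw R k)^-1 <= r /\ r / 2 <= (pw R k)^-1.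
Proof.
move=> r0 r1.
have ex : exists k, (pw R k)^-1 <= r := pw_exists r0.
case: (ex_minnP ex) => k hk hmin; exists k; split => //.
case: k hk hmin => [|k] hk hmin.
  rewrite /pw expn0 invr1 ler_pdivrMr // mul1r (le_trans r1) //.
  by rewrite (ler_nat R 1 2).
have : ~~ ((pw R k)^-1 <= r).
  by apply/negP => /hmin; rewrite ltnn.
rewrite -ltNge => hlt.
have e2 : pw R k.+1 = 2 * pw R k by rewrite /pw expnS natrM.
rewrite e2 invfM [X in _ <= X]mulrC ler_wpM2r // ?ltW //.
Qed.

Theorem core (R : realType) m
  (nu : {measure set (g_sigma_algebraType (@open 'rV[R]_m)) -> \bar R}) :
  exists N : set (g_sigma_algebraType (@open 'rV[R]_m)),
    measurable N /\ nu N = 0 /\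
    forall y : 'rV[R]_m, ~ N y -> exists c : R, 0 < c /\
      forall r, 0 < r -> r <= 1 -> ((c * r ^+ m)%:E <= nu (ball y r))%E.
Proof.
pose dl p (j : nat) : R := j.+1%:R^-1 / pw R p.+1 ^+ m.
have dl0 p j : 0 < dl p j.
  by rewrite /dl divr_gt0 // ?invr_gt0 ?ltr0n // exprn_gt0 // pw_gt0.
pose N := \bigcup_p \bigcap_j @Nd R m nu p (dl p j).
exists N; split.
  apply: bigcup_measurable => p _; apply: bigcap_measurableType => j _.
  exact: Nd_meas.
split.
  apply/eqP; rewrite eq_le measure_ge0 andbT.
  apply: le_trans (@measure_sigma_subadditive _ _ _ nu N (fun p => \bigcap_j @Nd R m nu p (dl p j)) _ _ (@subset_refl _ N)) _.
  - move=> p; apply: bigcap_measurableType => j _; exact: Nd_meas.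
  - apply: bigcup_measurable => p _; apply: bigcap_measurableType => j _.
    exact: Nd_meas.
  rewrite eseries0 // => p _ _.
  apply/eqP; rewrite eq_le measure_ge0 andbT.
  apply: ereal_le_inv_nat => j.
  apply: (@le_trans _ _ (nu (@Nd R m nu p (dl p j)))).
    apply: le_measure.
    - rewrite inE; apply: bigcap_measurableType => j' _; exact: Nd_meas.
    - rewrite inE; exact: Nd_meas.
    by move=> x hx; exact: hx j I.
  apply: le_trans (Nd_bound _ _ (ltW (dl0 p j))) _.
  rewrite lee_fin /dl mulrAC -mulrA divff ?mulr1 //.
  by rewrite expf_neq0 // gt_eqF // pw_gt0.
move=> y hN.
have [p hb] := ex_box y.
have : ~ (forall j, @Nd R m nu p (dl p j) y).
  by move=> H; apply: hN; exists p => // j _; exact: H j.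
move=> /existsNP [j hj].
have nlt k : ~ ltp nu p (dl p j) k y.
  by move=> hk; apply: hj; split => //; exists k => //; exact: ltp_Gk.
exists (dl p j / 2 ^+ m); split; first by rewrite divr_gt0 // exprn_gt0.
move=> r r0 r1.
have [k [hk1 hk2]] := pw_choose r0 r1.
have [z [cz _]] := box_cube k hb.
have nl : ~ light nu p (dl p j) k z by move=> hl; apply: (nlt k); exists z.
have : ((dl p j / pw R k ^+ m)%:E < nu (cube R m p k z))%E by rewrite ltNge; apply/negP.
move=> hlt.
have sub : cube R m p k z `<=` ball y r.
  move=> y' cy'; rewrite -ball_normE /ball_ /=.
  exact: cube_ball cz cy' hk1.
apply: le_trans (le_measure nu _ _ sub); last first.
  - rewrite inE; apply: open_meas; exact: ball_open.
  - rewrite inE; exact: cube_meas.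
apply: le_trans (ltW hlt); rewrite lee_fin.
rewrite (_ : dl p j / 2 ^+ m * r ^+ m = dl p j * (r / 2) ^+ m); last first.
  by rewrite expr_div_n; ring.
rewrite -exprVn; apply: ler_wpM2l; first exact: ltW.
apply: lerXn2r => //; rewrite ?nnegrE //; first by rewrite divr_ge0 // ltW.
by rewrite invr_ge0 ltW // pw_gt0.
Qed.

Unset Implicit Arguments.

Section Norms.
Variables (R : realType) (n : nat) (N : 'rV[R]_n -> R).
Hypothesis hN : is_norm N.

Lemma N0 : N 0 = 0.
Proof. by case: hN => _ hZ _; rewrite -(scale0r (0 : 'rV[R]_n)) hZ normr0 mul0r. Qed.

Lemma NN v : N (- v) = N v.
Proof. by case: hN => _ hZ _; rewrite -scaleN1r hZ normrN1 mul1r. Qed.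

Lemma Nge0 v : 0 <= N v.
Proof.
case: hN => _ _ hT.
have := hT v (- v); rewrite subrr N0 NN => h; lra.
Qed.

Lemma Nsub u v : N u - N v <= N (u - v).
Proof.
case: hN => _ _ hT.
by rewrite lerBlDr; have := hT (u - v) v; rewrite subrK.
Qed.

Lemma Nsum (s : seq 'I_n) (F : 'I_n -> 'rV[R]_n) :
  N (\sum_(i <- s) F i) <= \sum_(i <- s) N (F i).
Proof.
case: hN => _ _ hT.
elim: s => [|a s ih]; first by rewrite !big_nil N0.
by rewrite !big_cons; apply: le_trans (hT _ _) _; rewrite lerD2l.
Qed.

Lemma Nup : exists C, 0 < C /\ forall v, N v <= C * `|v|.
Proof.
exists (1 + \sum_(i < n) N 'e_i); split.
  by apply: lt_le_trans (ltr01) _; rewrite lerDl sumr_ge0 // => i _; exact: Nge0.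
move=> v; case: hN => _ hZ _.
rewrite {1}(row_sum_delta v).
apply: le_trans (Nsum _ _) _.
rewrite mulrDl mul1r mulr_suml addrC.
apply: (@le_trans _ _ (\sum_(i < n) N 'e_i * `|v|)); last by rewrite lerDl.
apply: ler_sum => i _; rewrite hZ mulrC ler_wpM2l //; first exact: Nge0.
exact: entry_le_norm.
Qed.

Lemma N_continuous : continuous N.
Proof.
have [C [C0 hC]] := Nup.
move=> x; apply/(@cvgrPdist_lt _ _ _ _ (@nbhs_filter _ (x : 'rV[R]_n))) => e e0.
apply/nbhs_ballP; exists (e / C); first by apply: divr_gt0.
move=> y; rewrite -ball_normE /ball_ /= => hxy.
apply: le_lt_trans (_ : C * `|x - y| < e); last by rewrite mulrC -ltr_pdivlMr.
rewrite ler_norml; apply/andP; split.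
  rewrite lerNl opprB; apply: le_trans (Nsub _ _) _.
  by rewrite -opprB NN hC.
by apply: le_trans (Nsub _ _) _; exact: hC.
Qed.

Lemma Nlow : exists c, 0 < c /\ forall v, `|v| <= c * N v.
Proof.
case: (pselect (exists v : 'rV[R]_n, v != 0)) => [[v0 v00]|hno]; last first.
  exists 1; split => // v; rewrite mul1r.
  have -> : v = 0 by apply/eqP; apply: contra_notT hno => h; exists v.
  by rewrite normr0 Nge0.
pose S := [set v : 'rV[R]_n | `|v| = 1].
have nv0 : `|v0| != 0 by rewrite normr_eq0.
have S0 : S !=set0.
  exists (`|v0|^-1 *: v0); rewrite /S /= normrZ normrV ?unitfE // normr_id mulVf //.
have cS : closed S.
  exact: (proj1 (continuous_closedP _) (@norm_continuous _ _) _ (@closed_eq _ 1)).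
have bS : bounded_set S.
  exists 1; split => // M hM x Sx /=; rewrite Sx; exact: ltW.
have kS : compact S by exact: bounded_closed_compact.
have [c0 Sc0 hmin] := EVT_min_rV S0 kS (continuous_subspaceT N_continuous).
move: Sc0; rewrite inE /S /= => Sc0.
have Nc0 : 0 < N c0.
  rewrite lt_neqAle Nge0 andbT eq_sym; apply/eqP => h.
  case: hN => hz _ _; move: (hz _ h) => c00.
  by move: Sc0; rewrite c00 normr0 => /eqP; rewrite eq_sym oner_eq0.
exists (N c0)^-1; split; first by rewrite invr_gt0.
move=> v; have [->|vn0] := eqVneq v 0; first by rewrite normr0 mulr_ge0 ?invr_ge0 ?Nge0 // ltW.
have nv : `|v| != 0 by rewrite normr_eq0.
have Sw : S (`|v|^-1 *: v).
  by rewrite /S /= normrZ normrV ?unitfE // normr_id mulVf.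
have := hmin _ (mem_set Sw).
case: hN => _ hZ _; rewrite hZ normrV ?unitfE // normr_id => h.
rewrite mulrC ler_pdivlMr //.
rewrite -(ler_pM2l (_ : 0 < `|v|^-1)); last by rewrite invr_gt0 lt_neqAle eq_sym nv normr_ge0.
by rewrite mulrA mulVf // mul1r.
Qed.

End Norms.

Lemma euclid_le (R : realType) n (v : 'rV[R]_n) : euclid_norm v <= n%:R * `|v|.
Proof.
rewrite /euclid_norm.
have h : \sum_(i < n) v ord0 i ^+ 2 <= (n%:R * `|v|) ^+ 2.
  apply: (@le_trans _ _ (\sum_(i < n) `|v| ^+ 2)).
    apply: ler_sum => i _; rewrite -real_normK ?num_real //.
    by apply: lerXn2r; rewrite ?nnegrE //; exact: entry_le_norm.
  rewrite sumr_const card_ord -(mulr_natl (`|v| ^+ 2) n) exprMn ler_wpM2r //.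
  rewrite -natrX ler_nat.
  by case: (n) => // k; rewrite expnS leq_pmulr // expn_gt0.
apply: le_trans (ler_wsqrtr h) _; by rewrite sqrtr_sqr ger0_norm // mulr_ge0.
Qed.

Lemma euclid_cont (R : realType) n (x : 'rV[R]_n) :
  continuous (fun y : 'rV[R]_n => euclid_norm (y - x)).
Proof.
have hs (s : seq 'I_n) : continuous (fun y : 'rV[R]_n => \sum_(i <- s) (y - x) ord0 i ^+ 2).
  elim: s => [|a s ih].
    have -> : (fun y : 'rV[R]_n => \sum_(i <- [::]) (y - x) ord0 i ^+ 2) = (fun=> 0).
      by apply: boolp.funext => y; rewrite big_nil.
    exact: cst_continuous.
  have -> : (fun y : 'rV[R]_n => \sum_(i <- a :: s) (y - x) ord0 i ^+ 2) =
    (fun y => (y ord0 a - x ord0 a) * (y ord0 a - x ord0 a) + \sum_(i <- s) (y - x) ord0 i ^+ 2).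
    by apply: boolp.funext => y; rewrite big_cons !mxE expr2.
  move=> y; apply: (@continuousD _ _ _ (fun y : 'rV[R]_n => (y ord0 a - x ord0 a) * (y ord0 a - x ord0 a)) (fun y => \sum_(i <- s) (y - x) ord0 i ^+ 2)); last exact: ih.
  have hc : {for y, continuous (fun y : 'rV[R]_n => y ord0 a - x ord0 a)}.
    apply: (@continuousD _ _ _ (fun y : 'rV[R]_n => y ord0 a) (fun=> - x ord0 a)).
      exact: coord_continuous.
    exact: cst_continuous.
  exact: (@continuousM _ _ (fun y : 'rV[R]_n => y ord0 a - x ord0 a) (fun y : 'rV[R]_n => y ord0 a - x ord0 a)).
move=> y; rewrite /euclid_norm.
apply: (@continuous_comp _ _ _ (fun y : 'rV[R]_n => \sum_(i < n) (y - x) ord0 i ^+ 2) Num.sqrt).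
  exact: hs.
exact: sqrt_continuous.
Qed.

Lemma euclid_ball_open (R : realType) n (x : 'rV[R]_n) eps :
  open [set y : 'rV[R]_n | euclid_norm (y - x) < eps].
Proof.
have := proj1 (continuousP _) (@euclid_cont R n x) _ (@open_lt _ eps).
by [].
Qed.

Section PF.
Context d (T : measurableType d) (R : realType) (m : nat)
  (P : {measure set T -> \bar R})
  (Y : T -> g_sigma_algebraType (@open 'rV[R]_m)).

Definition pfY (mY : measurable_fun setT Y) := pushforward P Y.

Variable mY : measurable_fun setT Y.

Let pf0 : pfY mY set0 = 0%E.
Proof. by rewrite /pfY /pushforward preimage_set0 measure0. Qed.

Let pf_ge0 A : (0 <= pfY mY A)%E.
Proof. exact: measure_ge0. Qed.

Let pf_sa : semi_sigma_additive (pfY mY).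
Proof.
move=> F mF tF mUF; rewrite /pfY /pushforward preimage_bigcup.
apply: measure_semi_sigma_additive.
- by move=> k; rewrite -[X in measurable X]setTI; exact: mY.
- apply/trivIsetP => /= i j _ _ ij; rewrite -preimage_setI.
  by move/trivIsetP : tF => /(_ _ _ _ _ ij) ->//; rewrite preimage_set0.
- by rewrite -preimage_bigcup -[X in measurable X]setTI; exact: mY.
Qed.

HB.instance Definition _ := isMeasure.Build _ _ _ (pfY mY) pf0 pf_ge0 pf_sa.

End PF.

Lemma meas_I_null d (T : measurableType d) (R : realType)
  (mu : {measure set T -> \bar R}) (A G : set T) :
  measurable A -> measurable G -> mu (~` G) = 0%E -> (mu A <= mu (A `&` G))%E.
Proof.
move=> mA mG h.
have eA : A = (A `&` G) `|` (A `&` ~` G).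
  by apply/seteqP; split => x; [case: (pselect (G x)) => hx Ax; [left|right] | case => -[]].
rewrite [X in (mu X <= _)%E]eA.
apply: le_trans (measureU2 _ _ _) _.
- exact: measurableI.
- by apply: measurableI => //; exact: measurableC.
have h2 : (mu (A `&` ~` G) <= 0)%E.
  rewrite -h; apply: le_measure.
  - by rewrite inE; apply: measurableI => //; exact: measurableC.
  - by rewrite inE; exact: measurableC.
  exact: subIsetr.
by apply: le_trans (leeD2l _ h2) _; rewrite adde0.
Qed.

Theorem mainTheorem7 (R : realType) (dT : measure_display) (T : measurableType dT)
  (P : probability T R) (n m : nat) (X : T -> 'rV[R]_n) (B : set 'rV[R]_n)
  (d : 'rV[R]_n -> 'rV[R]_m) (Nn : 'rV[R]_n -> R) (Nm : 'rV[R]_m -> R) (c : R) :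
  random_vector X ->
  borel_rV B ->
  {ae P, forall w, B (X w)} ->
  measurable_on_rV B d ->
  is_norm Nn -> is_norm Nm ->
  0 < c ->
  (forall x y, B x -> B y -> c * Nn (x - y) <= Nm (d x - d y)) ->
  {ae P, forall w, mould P X m (X w)}.
Proof.
move=> rvX bB aeB md hNn hNm c0 hd.
have [K1 [K10 hK1]] := @Nlow R n Nn hNn.
have [C2 [C20 hC2]] := @Nup R m Nm hNm.
pose d' := fun x => if `[< B x >] then d x else 0.
pose Y := fun w => (d' (X w) : g_sigma_algebraType (@open 'rV[R]_m)).
have mY : measurable_fun setT Y.
  move=> _ A mA; rewrite setTI.
  have -> : Y @^-1` A = X @^-1` ((B `&` d @^-1` A) `|` (~` B `&` (fun=> A 0))).
    apply/seteqP; split => w; rewrite /Y /d' /=;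
      case: (pselect (B (X w))) => hb.
    - by rewrite asboolT // => h; left.
    - by rewrite asboolF // => h; right.
    - by rewrite asboolT // => -[[]|[]].
    - by rewrite asboolF // => -[[]|[]].
  apply: rvX.
  change (measurable ((B `&` d @^-1` A) `|` (~` B `&` (fun=> A 0)) :
     set (g_sigma_algebraType (@open 'rV[R]_n)))).
  apply: measurableU.
    exact: (md A mA).
  apply: measurableI; first exact: (measurableC (bB : measurable (B : set (g_sigma_algebraType (@open 'rV[R]_n))))).
  case: (pselect (A 0)) => hA.
    by rewrite (_ : (fun=> A 0) = setT) //; apply/seteqP; split.
  by rewrite (_ : (fun=> A 0) = set0) //; apply/seteqP; split.
pose nu := @pfY _ _ _ _ P Y mY.
have [Nb [mNb [nuN hNb]]] := core nu.
have [N0 [mN0 PN0 sN0]] := aeB.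
have mG : measurable (X @^-1` B) by exact: rvX.
have PG : P (~` (X @^-1` B)) = 0%E.
  apply/eqP; rewrite eq_le measure_ge0 andbT -PN0; apply: le_measure.
  - by rewrite inE; exact: measurableC.
  - by rewrite inE.
  exact: sN0.
have mYN : measurable (Y @^-1` Nb) by rewrite -[X in measurable X]setTI; exact (mY measurableT _ mNb).
have negY : P.-negligible (Y @^-1` Nb).
  by exists (Y @^-1` Nb); split => //; exact: nuN.
apply: (negligibleS _ (negligibleU aeB negY)).
move=> w /= hw.
case: (pselect (B (X w))) => [hB|hB]; last by left.
right; apply: contrapT => hYN; apply: hw.
have [cc [cc0 hcc]] := hNb _ hYN.
have YwE : Y w = d (X w) by rewrite /Y /d' asboolT.
pose A := (n%:R + 1) * K1 * C2 / c.
have n10 : 0 < n%:R + 1 :> R by have := ler0n R n; lra.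
have A0 : 0 < A by rewrite /A; apply: divr_gt0 => //; apply: mulr_gt0 => //; exact: mulr_gt0.
have sub e : 0 < e -> (Y @^-1` ball (Y w) (e / A)) `&` (X @^-1` B) `<=`
    [set w' | euclid_norm (X w' - X w) < e].
  move=> e0 w' [hb hB'] /=.
  have Yw' : Y w' = d (X w') by rewrite /Y /d' asboolT.
  move: hb; rewrite /= -ball_normE /ball_ /= YwE Yw' => h5.
  set u := X w' - X w.
  have h1 : euclid_norm u <= (n%:R + 1) * `|u|.
    apply: le_trans (@euclid_le R n u) _; apply: ler_wpM2r; first exact: normr_ge0.
    by rewrite lerDl.
  have h2 : `|u| <= K1 * Nn u := hK1 u.
  have h3 : Nn u <= Nm (d (X w') - d (X w)) / c.
    by rewrite ler_pdivlMr // mulrC; exact: hd.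
  have h4 : Nm (d (X w') - d (X w)) <= C2 * `|d (X w) - d (X w')|.
    by rewrite distrC; exact: hC2.
  have h6 : euclid_norm u <= (n%:R + 1) * (K1 * (C2 * `|d (X w) - d (X w')| * c^-1)).
    apply: le_trans h1 _; apply: ler_wpM2l; first exact: ltW n10.
    apply: le_trans h2 _; apply: ler_wpM2l; first exact: ltW K10.
    apply: le_trans h3 _; apply: ler_wpM2r; [by rewrite invr_ge0 ltW | exact: h4].
  apply: le_lt_trans h6 _.
  have -> : (n%:R + 1) * (K1 * (C2 * `|d (X w) - d (X w')| * c^-1)) =
     `|d (X w) - d (X w')| * A by rewrite /A; ring.
  by rewrite -ltr_pdivlMr.
have hP e : 0 < e -> e <= A ->
    (((cc * (e / A) ^+ m)%R)%:E <= P [set w' | (euclid_norm (X w' - X w) < e)%R])%E.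
  move=> e0 eA.
  have mball : measurable (Y @^-1` ball (Y w) (e / A)).
    rewrite -[X in measurable X]setTI; apply: (mY measurableT).
    by apply: open_meas; exact: ball_open.
  have mE : measurable [set w' | euclid_norm (X w' - X w) < e].
    have hb : borel_rV [set y : 'rV[R]_n | euclid_norm (y - X w) < e].
      by apply: sub_gen_smallest; exact: (@euclid_ball_open R n (X w) e).
    by have := rvX _ hb.
  apply: le_trans (hcc (e / A) _ _) _.
  - by rewrite divr_gt0.
  - by rewrite ler_pdivrMr // mul1r.
  apply: le_trans (@meas_I_null _ _ _ P _ _ mball mG PG) _.
  by apply: le_measure; rewrite ?inE //; [exact: measurableI | exact: sub].
clearbody A.
rewrite /mould /= limf_einfE.
have Am0 : A ^+ m != 0 by rewrite expf_neq0 // gt_eqF.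
apply: (@lt_le_trans _ _ ((cc / A ^+ m)%:E)).
  by rewrite lte_fin divr_gt0 // exprn_gt0.
have HV : (0:R)^'+ [set e : R | 0 < e <= A].
  apply: filterS (filterI (nbhs_right_gt 0) (nbhs_right_lt A0)) => e [h1 h2].
  by apply/andP; split => //; exact: ltW.
apply: le_trans (ereal_sup_ubound _); last by exists [set e : R | 0 < e <= A].
apply/ereal_infP => _ [e /andP[e0 eA] <-].
apply: le_trans (lee_wpmul2r _ (hP e e0 eA)); last first.
  change ((0%R)%:E <= ((e ^+ m)^-1)%:E)%E.
  by rewrite lee_fin invr_ge0 exprn_ge0 // ltW.
rewrite -EFinM lee_fin expr_div_n.
have em0 : e ^+ m != 0 by rewrite expf_neq0 // gt_eqF.
have hA : A != 0 by rewrite gt_eqF.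
have he : e != 0 by rewrite gt_eqF.
rewrite le_eqVlt; apply/orP; left; apply/eqP; field.
by rewrite em0 Am0.
Qed.
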